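(* Let $V_\theta$ be a real vector space of dimension $2$, and let $M\subset V_\theta\times[0,1]$ be a dichotomous item response hypersurface (IRHS), with associated function $f:V_\theta\to[0,1]$ (so $M=\{(\theta,f(\theta)):\theta\in V_\theta\}$). Then the MIRT model given by $M$ is a trivial extension of a unidimensional IRT model: there exist nonzero vectors $u,v\in V_\theta$, linearly independent, such that $$f(\mu u+\lambda v)=f(\mu u)\quad\text{for all }\mu,\lambda\in\mathbb{R},$$ so that $f$ is determined by the monotonic function $\mu\mapsto f(\mu u)$, $\mathbb{R}\to[0,1]$.
   Context: A dichotomous item response hypersurface (IRHS) is a $D=\dim V_\theta$ dimensional smooth submanifold $M$ of $V_\theta\times[0,1]$ such that for any two vectors $v,w\in V_\theta$, the intersection of $(w+\mathbb{R}\cdot v)\times[0,1]$ with $M$ is the graph of a monotonic function $w+\mathbb{R}\cdot v\to[0,1]$, where $w+\mathbb{R}\cdot v=\{w+\lambda v:\lambda\in\mathbb{R}\}$. A function $g:w+\mathbb{R}\cdot v\to[0,1]$ is called monotonic if either $g(w+\lambda v)\le g(w+\mu v)$ for all $\lambda\le\mu$, or $g(w+\lambda v)\ge g(w+\mu v)$ for all $\lambda\le\mu$. (Taking $v=0$ shows that $M$ is the graph of a function $f:V_\theta\to[0,1]$.) A MIRT model is given by an IRHS; a unidimensional IRT model is a monotonic function $\mathbb{R}\to[0,1]$. *)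

(* Defs.v *)
(* V_theta is modelled as 'rV[R]_2 (R : realType). *)
From HB Require Import structures.
From mathcomp Require Import all_boot all_order all_algebra.
From mathcomp Require Import all_classical all_reals all_analysis.
Set Implicit Arguments. Unset Strict Implicit. Unset Printing Implicit Defensive.
Import Order.TTheory GRing.Theory Num.Theory.
Import numFieldNormedType.Exports.
Local Open Scope classical_set_scope.
Local Open Scope ring_scope.

Section IRHS.
Variable R : realType.

Definition e2 (i : 'I_2) : 'rV[R]_2 := delta_mx 0 i.

Fixpoint Cn (n : nat) (g : 'rV[R]_2 -> R) : Prop :=
  match n with
  | 0 => continuous g
  | n.+1 => continuous g /\
      forall i : 'I_2, (forall x, derivable g x (e2 i)) /\
                       Cn n (fun x => 'D_(e2 i) g x)
  end.

Definition smooth2 (g : 'rV[R]_2 -> R) : Prop := forall n, Cn n g.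

(* the point (theta, t) of V_theta x R viewed in R^3 *)
Definition emb (p : 'rV[R]_2 * R) : 'rV[R]_3 := row_mx p.1 (p.2)%:M.

(* M is a 2-dimensional (codimension 1) embedded smooth submanifold of
   V_theta x R = R^3: locally M is the graph of a smooth function of two of
   the three coordinates. *)
Definition smooth_hypersurface (M : set ('rV[R]_2 * R)) : Prop :=
  forall p, M p -> exists (U : set 'rV[R]_3) (k : 'I_3) (g : 'rV[R]_2 -> R),
    [/\ open U, U (emb p), smooth2 g &
        forall q, U (emb q) -> (M q <-> (emb q) 0 k = g (col' k (emb q)))].

Definition line (w v : 'rV[R]_2) : set 'rV[R]_2 :=
  [set x | exists lam : R, x = w + lam *: v].

Definition monotonic_on_line (g : 'rV[R]_2 -> R) (w v : 'rV[R]_2) : Prop :=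
  (forall lam mu : R, lam <= mu -> g (w + lam *: v) <= g (w + mu *: v)) \/
  (forall lam mu : R, lam <= mu -> g (w + lam *: v) >= g (w + mu *: v)).

Definition IRHS (M : set ('rV[R]_2 * R)) : Prop :=
  [/\ (forall p, M p -> 0 <= p.2 <= 1),
      smooth_hypersurface M &
      forall w v : 'rV[R]_2, exists g : 'rV[R]_2 -> R,
        [/\ monotonic_on_line g w v,
            (forall x, line w v x -> 0 <= g x <= 1) &
            [set p | M p /\ line w v p.1] = [set (x, g x) | x in line w v]]].

Definition graph (f : 'rV[R]_2 -> R) : set ('rV[R]_2 * R) :=
  [set (x, f x) | x in [set: 'rV[R]_2]].

End IRHS.

(* Main.v *)
Require Import Defs.
From HB Require Import structures.
From mathcomp Require Import all_boot all_order all_algebra.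
From mathcomp Require Import all_classical all_reals all_analysis.
From mathcomp Require Import ring lra.
Import Order.TTheory GRing.Theory Num.Theory.
Import numFieldNormedType.Exports.
Local Open Scope classical_set_scope.
Local Open Scope ring_scope.

Section Cont.
Variable R : realType.

Lemma emb_lo (y : 'rV[R]_2) t (j : 'I_2) : emb (y, t) 0 (lshift 1 j) = y 0 j.
Proof. rewrite /emb /=. exact: (@row_mxEl R 1 2 1 y t%:M 0 j). Qed.

Lemma emb_hi (y : 'rV[R]_2) t (j : 'I_1) : emb (y, t) 0 (rshift 2 j) = t.
Proof. rewrite /emb /= (@row_mxEr R 1 2 1 y t%:M 0 j) mxE ord1 /=. by rewrite mulr1n. Qed.

Lemma emb_close (y y' : 'rV[R]_2) t t' d :
  (forall j, `|y 0 j - y' 0 j| < d) -> `|t - t'| < d ->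
  forall j : 'I_3, `|emb (y, t) 0 j - emb (y', t') 0 j| < d.
Proof.
move=> Hy Ht j; case: (@splitP 2 1 j) => j' e.
- have -> : j = lshift 1 j' by apply: val_inj.
  by rewrite !emb_lo.
- have -> : j = rshift 2 j' by apply: val_inj.
  by rewrite !emb_hi.
Qed.

Lemma col'_close (k : 'I_3) (z z' : 'rV[R]_3) d :
  (forall j, `|z 0 j - z' 0 j| < d) ->
  forall j : 'I_2, `|col' k z 0 j - col' k z' 0 j| < d.
Proof. by move=> H j; rewrite !mxE. Qed.

Lemma col'_hi (kk : 'I_1) (y : 'rV[R]_2) t : col' (rshift 2 kk) (emb (y, t)) = y.
Proof.
apply/rowP => j; rewrite mxE.
have -> : lift (rshift 2 kk) j = lshift 1 j.
  apply: val_inj; rewrite /= ord1 /bump /=.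
  by case: j => [[|[|//]]].
by rewrite emb_lo.
Qed.

Lemma col'_lo (kk : 'I_2) (y : 'rV[R]_2) t a :
  col' (lshift 1 kk) (emb (y + a *: delta_mx 0 kk, t)) = col' (lshift 1 kk) (emb (y, t)).
Proof.
apply/rowP => j; rewrite !mxE.
have hn := neq_lift (lshift 1 kk) j.
case: (@splitP 2 1 (lift (lshift 1 kk) j)) => j' e0.
- have e : lift (lshift 1 kk) j = lshift 1 j' by apply: val_inj.
  have hj : j' != kk.
    by apply: contra hn => /eqP ekk; rewrite e ekk.
  by rewrite /= !mxE (negbTE hj) andbF mulr0 addr0.
- by [].
Qed.

Lemma epsdelta_cont (h : R -> R) :
  (forall t e, 0 < e -> exists2 d, 0 < d & forall s, `|t - s| < d -> `|h t - h s| < e) ->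
  continuous h.
Proof.
move=> H t; apply/cvgrPdist_lt => e e0.
have [d d0 Hd] := H t e e0.
apply/nbhs_ballP; exists d => // s; rewrite /ball /=; exact: Hd.
Qed.

Lemma ivt0 (h : R -> R) (a b : R) :
  (forall t e, 0 < e -> exists2 d, 0 < d & forall s, `|t - s| < d -> `|h t - h s| < e) ->
  a <= b -> (h a <= 0 <= h b) \/ (h b <= 0 <= h a) ->
  exists2 c, a <= c <= b & h c = 0.
Proof.
move=> Hc ab Hs.
have hc := @epsdelta_cont h Hc.
have [c cin hc0] : exists2 c, c \in `[a, b] & h c = 0.
  apply: IVT => //; first exact: continuous_subspaceT.
  by case: Hs => /andP [h1 h2]; rewrite ge_min le_max h1 h2 ?orbT.
by exists c => //; move: cin; rewrite in_itv.
Qed.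


Lemma open_ballE n (U : set 'rV[R]_n) z : open U -> U z ->
  exists2 r : R, 0 < r & forall y : 'rV[R]_n, (forall j, `|z 0 j - y 0 j| < r) -> U y.
Proof.
move=> oU Uz.
have : nbhs z U by apply: open_nbhs_nbhs; split.
move=> /nbhs_ballP [r r0 H]; exists r => // y Hy; apply: H.
split => // i j; rewrite ord1; move: (Hy j).
by rewrite /ball /=.
Qed.

Lemma cont_ballE n (g : 'rV[R]_n -> R) x : {for x, continuous g} ->
  forall e : R, 0 < e -> exists2 d : R, 0 < d & forall y : 'rV[R]_n,
   (forall j, `|x 0 j - y 0 j| < d) -> `|g x - g y| < e.
Proof.
move=> gc e e0.
have : nbhs x (g @^-1` ball (g x) e).
  apply: gc; exact: nbhsx_ballx.
move=> /nbhs_ballP [r r0 H]; exists r => // y Hy.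
have := H y; rewrite /ball /=; apply.
split => // i j; rewrite ord1; move: (Hy j); by rewrite /ball /=.
Qed.

Lemma negprod (a b : R) : a * b < 0 -> (a <= 0 <= b) \/ (b <= 0 <= a).
Proof.
move=> hab; case: (lerP a 0) => ha; [left|right]; apply/andP; split => //.
- rewrite leNgt; apply/negP => hb.
  by move: hab; rewrite ltNge (mulr_le0 ha (ltW hb)).
- rewrite leNgt; apply/negP => hb.
  by move: hab; rewrite ltNge (mulr_ge0 (ltW ha) (ltW hb)).
- exact: ltW.
Qed.

Lemma samesign (a a' : R) : `|a - a'| < `|a| -> 0 < a * a'.
Proof.
case: (ltrgtP 0 a) => ha.
- rewrite (gtr0_norm ha) ltr_norml => /andP [_ h].
  apply: mulr_gt0 => //; lra.
- rewrite (ltr0_norm ha) ltr_norml => /andP [h _].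
  rewrite nmulr_rgt0 //; lra.
- by rewrite -ha normr0 ltNge normr_ge0.
Qed.

Variable f : 'rV[R]_2 -> R.
Hypothesis Hs : smooth_hypersurface (graph f).

Lemma graphE q : graph f q <-> q.2 = f q.1.
Proof.
split; first by move=> [x _ <-].
by case: q => a b /= ->; exists a.
Qed.


Lemma f_cont (x : 'rV[R]_2) (e : R) : 0 < e -> exists2 d : R, 0 < d &
  forall y : 'rV[R]_2, (forall j, `|x 0 j - y 0 j| < d) -> `|f x - f y| < e.
Proof.
move=> e0.
set c := f x.
have gp : graph f (x, c) by rewrite graphE.
have [U [k [g [oU Up sg Hiff]]]] := Hs _ gp.
have gc : continuous g by exact: (sg 0%N).
have [r r0 HU] := @open_ballE _ _ _ oU Up.
pose H y t := emb (y, t) 0 k - g (col' k (emb (y, t))).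
have zero : forall (y : 'rV[R]_2) (t : R), (forall j, `|x 0 j - y 0 j| < r) -> `|c - t| < r ->
    (t = f y <-> H y t = 0).
  move=> y t hy ht.
  have Ue : U (emb (y, t)) by apply: HU; apply: (@emb_close x y c t r).
  have := Hiff (y, t) Ue; rewrite graphE /= /H => ->.
  by split => [->|/eqP]; [rewrite subrr|rewrite subr_eq0 => /eqP].
have Hcj : forall (y : 'rV[R]_2) (t e' : R), 0 < e' -> exists2 d, 0 < d & forall (y' : 'rV[R]_2) (t' : R),
    (forall j, `|y 0 j - y' 0 j| < d) -> `|t - t'| < d -> `|H y t - H y' t'| < e'.
  move=> y t e' e'0.
  have e2 : 0 < e' / 2 by rewrite divr_gt0.
  have [d1 d10 Hd1] := @cont_ballE _ _ _ (gc (col' k (emb (y, t)))) _ e2.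
  exists (Num.min d1 (e' / 2)); first by rewrite lt_min d10 e2.
  move=> y' t' hy ht.
  have hy1 : forall j, `|y 0 j - y' 0 j| < d1.
    by move=> j; have := hy j; rewrite lt_min => /andP [].
  have hy2 : forall j, `|y 0 j - y' 0 j| < e' / 2.
    by move=> j; have := hy j; rewrite lt_min => /andP [].
  move: ht; rewrite lt_min => /andP [ht1 ht2].
  have h1 := @emb_close _ _ _ _ _ hy2 ht2 k.
  have h2 := Hd1 _ (@col'_close k _ _ _ (@emb_close _ _ _ _ _ hy1 ht1)).
  rewrite /H.
  have -> : emb (y, t) 0 k - g (col' k (emb (y, t))) - (emb (y', t') 0 k - g (col' k (emb (y', t'))))
    = (emb (y, t) 0 k - emb (y', t') 0 k) - (g (col' k (emb (y, t))) - g (col' k (emb (y', t'))))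
    by ring.
  apply: (le_lt_trans (ler_normB _ _)).
  have -> : e' = e' / 2 + e' / 2 by field.
  exact: ltrD.
have Ht : forall (y : 'rV[R]_2) (t e' : R), 0 < e' -> exists2 d, 0 < d & forall t' : R,
    `|t - t'| < d -> `|H y t - H y t'| < e'.
  move=> y t e' e'0; have [d d0 Hd] := Hcj y t e' e'0.
  by exists d => // t' ht; apply: Hd => // j; rewrite subrr normr0.
set eta := Num.min r e / 2.
have eta0 : 0 < eta by rewrite divr_gt0 // lt_min r0 e0.
have etar : eta < r.
  have : Num.min r e <= r by rewrite ge_min lexx.
  rewrite /eta; lra.
have etae : eta < e.
  have : Num.min r e <= e by rewrite ge_min lexx orbT.
  rewrite /eta; lra.
have x0 : forall j, `|x 0 j - x 0 j| < r by move=> j; rewrite subrr normr0.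
have cc : `|c - c| < r by rewrite subrr normr0.
have Hxc : H x c = 0 by exact: (zero x c x0 cc).1.
have hm : H x (c - eta) * H x (c + eta) < 0.
  have cm : `|c - (c - eta)| < r by rewrite opprB addrC subrK gtr0_norm.
  have cp : `|c - (c + eta)| < r by rewrite opprD addrA subrr sub0r normrN gtr0_norm.
  have an : H x (c - eta) != 0.
    apply/eqP => /(zero x _ x0 cm).2; rewrite -/c => h; lra.
  have bn : H x (c + eta) != 0.
    apply/eqP => /(zero x _ x0 cp).2; rewrite -/c => h; lra.
  case: (@splitP 2 1 k) => kk ek.
  - have ek' : k = lshift 1 kk by apply: val_inj.
    have shift : forall a t, H (x + a *: delta_mx 0 kk) t = H x t + a.
      move=> a t; rewrite /H ek' col'_lo !emb_lo !mxE /= eqxx mulr1; ring.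
    rewrite ltNge; apply/negP => hge.
    have pos : 0 < H x (c - eta) * H x (c + eta).
      by rewrite lt_def hge mulf_neq0.
    have tz : forall sn : R, (sn = 1 \/ sn = -1) -> 0 < sn * H x (c - eta) ->
        0 < sn * H x (c + eta) -> False.
      move=> sn hsg ha hb.
      have sgsg : sn * sn = 1 by case: hsg => ->; rewrite ?mulr1 ?mulrNN ?mulr1.
      have nsg : `|sn| = 1 by case: hsg => ->; rewrite ?normrN normr1.
      have sg0 : sn != 0 by case: hsg => ->; rewrite ?oppr_eq0 oner_neq0.
      set m := Num.min (sn * H x (c - eta)) (sn * H x (c + eta)).
      have m0 : 0 < m by rewrite lt_min ha hb.
      set be := Num.min m r / 2.
      have be0 : 0 < be by rewrite divr_gt0 // lt_min m0 r0.
      have bem : be < m.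
        have : Num.min m r <= m by rewrite ge_min lexx.
        rewrite /be; lra.
      have ber : be < r.
        have : Num.min m r <= r by rewrite ge_min lexx orbT.
        rewrite /be; lra.
      have ma : m <= sn * H x (c - eta) by rewrite ge_min lexx.
      have mb : m <= sn * H x (c + eta) by rewrite ge_min lexx orbT.
      set y' := x + (- (sn * be)) *: delta_mx 0 kk.
      have hy' : forall j, `|x 0 j - y' 0 j| < r.
        move=> j; rewrite !mxE /=.
        case: (j == kk) => /=.
        + rewrite mulr1 opprD addrA subrr sub0r opprK normrM nsg mul1r gtr0_norm //.
        + by rewrite mulr0 addr0 subrr normr0.
      pose h t := sn * H y' t.
      have hE : forall t, h t = sn * H x t - be.
        by move=> t; rewrite /h /y' shift mulrDr mulrN mulrA sgsg mul1r.
      have hc : forall t e', 0 < e' -> exists2 d, 0 < d & forall t',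
          `|t - t'| < d -> `|h t - h t'| < e'.
        move=> t e' e'0; have [d d0 Hd] := Ht y' t e' e'0.
        exists d => // t' ht'; rewrite /h -mulrBr normrM nsg mul1r; exact: Hd.
      have h0 : forall t, h t = 0 -> `|c - t| < r -> t = f y'.
        move=> t ht hct; apply/(zero y' t hy' hct).
        by move/eqP: ht; rewrite /h mulf_eq0 (negbTE sg0) /= => /eqP.
      have hcm : h c < 0 by rewrite hE Hxc mulr0 sub0r oppr_lt0.
      have hm1 : 0 < h (c - eta) by rewrite hE subr_gt0; lra.
      have hp1 : 0 < h (c + eta) by rewrite hE subr_gt0; lra.
      have [t1 /andP [t11 t12] ht1] := @ivt0 h (c - eta) c hc ltac:(lra)
        ltac:(by right; apply/andP; split; apply: ltW).
      have [t2 /andP [t21 t22] ht2] := @ivt0 h c (c + eta) hc ltac:(lra)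
        ltac:(by left; apply/andP; split; apply: ltW).
      have e1 := h0 t1 ht1 ltac:(rewrite ger0_norm ?subr_ge0 //; lra).
      have e2 := h0 t2 ht2 ltac:(rewrite ler0_norm ?subr_le0 //; lra).
      have et : t1 = c by apply/eqP; rewrite eq_le t12 e1 -e2 t21.
      by move: hcm; rewrite -et ht1 ltxx.
    case: (ltrgtP 0 (H x (c - eta))) => ha.
    + have hb : 0 < H x (c + eta) by rewrite -(pmulr_rgt0 _ ha).
      by apply: (tz 1 (or_introl erefl)); rewrite mul1r.
    + have hb : H x (c + eta) < 0 by rewrite -(nmulr_rgt0 _ ha).
      by apply: (tz (-1) (or_intror erefl)); rewrite mulN1r oppr_gt0.
    + by move: an; rewrite -ha eqxx.
  - have ek' : k = rshift 2 kk by apply: val_inj.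
    have HE : forall y t, H y t = t - g y by move=> y t; rewrite /H ek' emb_hi col'_hi.
    move: Hxc; rewrite !HE => /eqP; rewrite subr_eq0 => /eqP <-.
    have -> : (c - eta - c) * (c + eta - c) = - (eta * eta) by ring.
    by rewrite oppr_lt0 mulr_gt0.
have Hm1 : 0 < `|H x (c - eta)|.
  by rewrite normr_gt0; apply: contraTneq hm => ->; rewrite mul0r ltxx.
have Hm2 : 0 < `|H x (c + eta)|.
  by rewrite normr_gt0; apply: contraTneq hm => ->; rewrite mulr0 ltxx.
have [d1 d10 Hd1] := Hcj x (c - eta) _ Hm1.
have [d2 d20 Hd2] := Hcj x (c + eta) _ Hm2.
exists (Num.min r (Num.min d1 d2)); first by rewrite !lt_min r0 d10 d20.
move=> y hy.
have hyr : forall j, `|x 0 j - y 0 j| < r.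
  by move=> j; have := hy j; rewrite lt_min => /andP [].
have hy1 : forall j, `|x 0 j - y 0 j| < d1.
  by move=> j; have := hy j; rewrite !lt_min => /and3P [].
have hy2 : forall j, `|x 0 j - y 0 j| < d2.
  by move=> j; have := hy j; rewrite !lt_min => /and3P [].
have s1 := @samesign _ _ (Hd1 y (c - eta) hy1 ltac:(by rewrite subrr normr0)).
have s2 := @samesign _ _ (Hd2 y (c + eta) hy2 ltac:(by rewrite subrr normr0)).
have hp : H y (c - eta) * H y (c + eta) < 0.
  have hprod : 0 < (H x (c - eta) * H x (c + eta)) * (H y (c - eta) * H y (c + eta)).
    have -> : (H x (c - eta) * H x (c + eta)) * (H y (c - eta) * H y (c + eta)) =
      (H x (c - eta) * H y (c - eta)) * (H x (c + eta) * H y (c + eta)) by ring.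
    exact: mulr_gt0.
  by move: hprod; rewrite nmulr_rgt0.
have [t /andP [t1 t2] Hyt] := @ivt0 (H y) (c - eta) (c + eta) (Ht y)
   ltac:(lra) (@negprod _ _ hp).
have hct : `|c - t| <= eta.
  rewrite ler_norml; apply/andP; split; lra.
have := (zero y t hyr (le_lt_trans hct etar)).2 Hyt => <-.
exact: (le_lt_trans hct etae).
Qed.
End Cont.

Section Geo.
Variable R : realType.
Variable f : 'rV[R]_2 -> R.
Hypothesis Hmono : forall w v : 'rV[R]_2,
  (forall l m : R, l <= m -> f (w + l *: v) <= f (w + m *: v)) \/
  (forall l m : R, l <= m -> f (w + m *: v) <= f (w + l *: v)).
Hypothesis Hcont : forall x : 'rV[R]_2, forall e : R, 0 < e -> exists2 d : R, 0 < d &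
  forall y : 'rV[R]_2, (forall j, `|x 0 j - y 0 j| < d) -> `|f x - f y| < e.

Lemma line_cont (w v : 'rV[R]_2) (l0 e : R) : 0 < e -> exists2 d : R, 0 < d &
  forall l, `|l0 - l| < d -> `|f (w + l0 *: v) - f (w + l *: v)| < e.
Proof.
move=> e0; have [d0 d00 H] := Hcont (w + l0 *: v) e e0.
set K := \sum_k `|v 0 k| + 1.
have K0 : 0 < K by rewrite /K ltr_pwDr // sumr_ge0.
exists (d0 / K); first by rewrite divr_gt0.
move=> l hl; apply: H => j; rewrite !mxE.
have -> : w 0 j + l0 * v 0 j - (w 0 j + l * v 0 j) = (l0 - l) * v 0 j by ring.
rewrite normrM.
have hv : `|v 0 j| <= K.
  rewrite /K (bigD1 j) //= -addrA lerDl; apply: addr_ge0 => //.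
  by apply: sumr_ge0.
have hl0 : 0 <= `|l0 - l| by [].
apply: (le_lt_trans (ler_wpM2l hl0 hv)).
by rewrite -ltr_pdivlMr.
Qed.

Lemma lim_le (w v : 'rV[R]_2) (l0 m : R) :
  (forall d, 0 < d -> exists l, `|l0 - l| < d /\ f (w + l *: v) <= m) ->
  f (w + l0 *: v) <= m.
Proof.
move=> H; rewrite leNgt; apply/negP => hlt.
have e0 : 0 < f (w + l0 *: v) - m by rewrite subr_gt0.
have [d d0 Hd] := line_cont w v l0 _ e0.
have [l [hl hm]] := H d d0.
have := Hd l hl.
rewrite ltNge => /negP; apply.
apply: le_trans (ler_norm _).
by rewrite lerB.
Qed.

Lemma lim_ge (w v : 'rV[R]_2) (l0 m : R) :
  (forall d, 0 < d -> exists l, `|l0 - l| < d /\ m <= f (w + l *: v)) ->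
  m <= f (w + l0 *: v).
Proof.
move=> H; rewrite leNgt; apply/negP => hlt.
have e0 : 0 < m - f (w + l0 *: v) by rewrite subr_gt0.
have [d d0 Hd] := line_cont w v l0 _ e0.
have [l [hl hm]] := H d d0.
have := Hd l hl.
rewrite ltNge => /negP; apply.
rewrite distrC; apply: le_trans (ler_norm _).
by rewrite lerB.
Qed.

Lemma seg_le (a b : 'rV[R]_2) (s m : R) : 0 <= s <= 1 ->
  f a <= m -> f b <= m -> f (a + s *: (b - a)) <= m.
Proof.
move=> /andP [s0 s1] ha hb.
have eb : a + 1 *: (b - a) = b by rewrite scale1r addrC subrK.
have ea : a + 0 *: (b - a) = a by rewrite scale0r addr0.
case: (Hmono a (b - a)) => H.
- by apply: le_trans (H _ _ s1) _; rewrite eb.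
- by apply: le_trans (H _ _ s0) _; rewrite ea.
Qed.

Lemma seg_ge (a b : 'rV[R]_2) (s m : R) : 0 <= s <= 1 ->
  m <= f a -> m <= f b -> m <= f (a + s *: (b - a)).
Proof.
move=> /andP [s0 s1] ha hb.
have eb : a + 1 *: (b - a) = b by rewrite scale1r addrC subrK.
have ea : a + 0 *: (b - a) = a by rewrite scale0r addr0.
case: (Hmono a (b - a)) => H.
- by apply: le_trans (H _ _ s0); rewrite ea.
- by apply: le_trans (H _ _ s1); rewrite eb.
Qed.

Lemma vec_id (x e z : 'rV[R]_2) (t s : R) : s != 0 ->
  (z + t *: e) + s *: (x - z) = z + s *: ((x + (t / s) *: e) - z).
Proof.
move=> s0; apply/rowP => j; rewrite !mxE; field; exact: s0.
Qed.

Lemma rec_le (x e z : 'rV[R]_2) (m : R) :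
  (forall tau, 0 <= tau -> f (x + tau *: e) <= m) -> f z <= m ->
  forall t, 0 <= t -> f (z + t *: e) <= m.
Proof.
move=> Hx Hz t t0.
have -> : z + t *: e = (z + t *: e) + 0 *: (x - z) by rewrite scale0r addr0.
apply: lim_le => d d0.
set s := Num.min (d / 2) 1.
have s0 : 0 < s by rewrite /s lt_min divr_gt0 ?ltr01.
have sd : s <= d / 2 by rewrite /s ge_min lexx.
exists s; split.
  rewrite sub0r normrN gtr0_norm //; lra.
rewrite vec_id ?gt_eqF //; apply: seg_le => //.
- by rewrite (ltW s0) /s ge_min lexx orbT.
- by apply: Hx; rewrite divr_ge0 // ltW.
Qed.

Lemma rec_ge (x e z : 'rV[R]_2) (m : R) :
  (forall tau, 0 <= tau -> m <= f (x + tau *: e)) -> m <= f z ->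
  forall t, 0 <= t -> m <= f (z + t *: e).
Proof.
move=> Hx Hz t t0.
have -> : z + t *: e = (z + t *: e) + 0 *: (x - z) by rewrite scale0r addr0.
apply: lim_ge => d d0.
set s := Num.min (d / 2) 1.
have s0 : 0 < s by rewrite /s lt_min divr_gt0 ?ltr01.
have sd : s <= d / 2 by rewrite /s ge_min lexx.
exists s; split.
  rewrite sub0r normrN gtr0_norm //; lra.
rewrite vec_id ?gt_eqF //; apply: seg_ge => //.
- by rewrite (ltW s0) /s ge_min lexx orbT.
- by apply: Hx; rewrite divr_ge0 // ltW.
Qed.

Definition N (d : 'rV[R]_2) := forall x t, 0 <= t -> f (x + t *: d) <= f x.

Lemma key (d x y : 'rV[R]_2) (t s : R) : 0 <= t -> 0 <= s ->
  f x < f (x + t *: d) -> f (y + s *: d) < f y -> False.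
Proof.
move=> t0 s0 hx hy.
have e0 : forall z : 'rV[R]_2, z + 0 *: d = z by move=> z; rewrite scale0r addr0.
have HA : forall l m : R, l <= m -> f (x + l *: d) <= f (x + m *: d).
  case: (Hmono x d) => // H.
  by have := H _ _ t0; rewrite e0 leNgt hx.
have HB : forall l m : R, l <= m -> f (y + m *: d) <= f (y + l *: d).
  case: (Hmono y d) => // H.
  by have := H _ _ s0; rewrite e0 leNgt hy.
have ray1 : forall tau, 0 <= tau -> f (x + tau *: (- d)) <= f x.
  move=> tau tau0; rewrite scalerN -scaleNr.
  by have := HA (- tau) 0; rewrite e0; apply; rewrite oppr_le0.
have ey : y + s *: d + s *: - d = y by rewrite scalerN addrK.
have h1 : f y <= f x.
  case: (lerP (f (y + s *: d)) (f x)) => hc.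
  - by have := @rec_le _ _ _ _ ray1 hc _ s0; rewrite ey.
  - have ray1' : forall tau, 0 <= tau -> f (x + tau *: - d) <= f (y + s *: d).
      by move=> tau tau0; apply: le_trans (ray1 _ tau0) (ltW hc).
    have := @rec_le _ _ _ _ ray1' (lexx _) _ s0.
    by rewrite ey leNgt hy.
have ray2 : forall tau, 0 <= tau -> f (x + t *: d) <= f (x + t *: d + tau *: d).
  move=> tau tau0; rewrite -addrA -scalerDl; apply: HA; lra.
have h2 : f (x + t *: d) <= f (y + s *: d).
  case: (lerP (f (x + t *: d)) (f y)) => hc.
  - exact: (@rec_ge _ _ _ _ ray2 hc _ s0).
  - have ray2' : forall tau, 0 <= tau -> f y <= f (x + t *: d + tau *: d).
      by move=> tau tau0; apply: le_trans (ltW hc) (ray2 _ tau0).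
    have := @rec_ge _ _ _ _ ray2' (lexx _) _ s0.
    by rewrite leNgt hy.
have := lt_le_trans hx h2; move/lt_trans => /(_ _ hy) /lt_le_trans /(_ h1).
by rewrite ltxx.
Qed.

Lemma consist (d : 'rV[R]_2) : N d \/ N (- d).
Proof.
case: (pselect (N d)) => [|nN]; [by left|right].
move=> y s s0; rewrite leNgt; apply/negP => hy.
apply: nN => x t t0; rewrite leNgt; apply/negP => hx.
apply: (@key d x (y + s *: - d) t s) => //; rewrite scalerN subrK; idtac.
by rewrite -scalerN.
Qed.

Lemma const (d : 'rV[R]_2) : N d -> N (- d) -> forall x l, f (x + l *: d) = f x.
Proof.
move=> H1 H2 x l; case: (lerP 0 l) => l0.
- apply/eqP; rewrite eq_le H1 //=.
  have := H2 (x + l *: d) l l0; by rewrite scalerN addrK.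
- have l0' : 0 <= - l by rewrite oppr_ge0 ltW.
  apply/eqP; rewrite eq_le.
  have := H2 x (- l) l0'; rewrite scalerN scaleNr opprK => -> /=.
  have := H1 (x + l *: d) (- l) l0'; by rewrite scaleNr addrK.
Qed.

Lemma N_add (a b : 'rV[R]_2) : N a -> N b -> N (a + b).
Proof.
move=> Ha Hb x t t0; rewrite scalerDr addrA.
by apply: le_trans (Hb _ _ t0) (Ha _ _ t0).
Qed.

Definition D (b0 b1 : 'rV[R]_2) (s : R) := (1 - s) *: b0 + s *: b1.

Lemma lineid1 (b0 b1 x : 'rV[R]_2) (t s : R) :
  x + t *: D b0 b1 s = (x + t *: b0) + s *: (t *: (b1 - b0)).
Proof. apply/rowP => j; rewrite !mxE; ring. Qed.

Lemma lineid2 (b0 b1 x : 'rV[R]_2) (t s : R) :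
  x + t *: - D b0 b1 s = (x + (- t) *: b0) + s *: ((- t) *: (b1 - b0)).
Proof. apply/rowP => j; rewrite !mxE; ring. Qed.

Lemma sup_dir (b0 b1 : 'rV[R]_2) : N b0 -> N (- b1) ->
  exists s, [/\ 0 <= s <= 1, N (D b0 b1 s) & N (- D b0 b1 s)].
Proof.
move=> N0 N1.
pose S := [set s : R | 0 <= s <= 1 /\ N (D b0 b1 s)].
have S0 : S 0.
  split; first by rewrite lexx ler01.
  by rewrite /D subr0 scale1r scale0r addr0.
have hasS : has_sup S.
  split; first by exists 0.
  by exists 1 => s [/andP [_ ->]].
set sig := sup S.
have sig0 : 0 <= sig by apply: sup_upper_bound.
have sig1 : sig <= 1.
  by apply: ge_sup; [exists 0 | move=> s [/andP [_ ->]]].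
exists sig; split; first by rewrite sig0 sig1.
- move=> x t t0; rewrite lineid1; apply: lim_le => d d0.
  have [s Ss hs] := sup_adherent d0 hasS.
  have ss : s <= sig by apply: sup_upper_bound.
  exists s; split.
    rewrite ger0_norm ?subr_ge0 //; rewrite -/sig in hs; lra.
  by rewrite -lineid1; case: Ss => _; apply.
- move=> x t t0; rewrite lineid2; apply: lim_le => d d0.
  case: (lerP (sig + d / 2) 1) => h.
  + exists (sig + d / 2); split.
      rewrite opprD addrA subrr sub0r normrN gtr0_norm; lra.
    rewrite -lineid2.
    have : N (D b0 b1 (sig + d / 2)) \/ N (- D b0 b1 (sig + d / 2)) by apply: consist.
    case => [HN|]; last by apply.
    have : sig + d / 2 <= sig.
      apply: sup_upper_bound => //; split => //; apply/andP; split => //; lra.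
    lra.
  + exists 1; split.
      rewrite ler0_norm ?subr_le0 //; lra.
    rewrite -lineid2 /D subrr scale0r add0r scale1r; exact: N1.
Qed.

Lemma ord2_cases (j : 'I_2) : j = 0 \/ j = 1.
Proof. by case: j => [[|[|//]]] hj; [left|right]; apply: val_inj. Qed.

Definition rot (d : 'rV[R]_2) : 'rV[R]_2 :=
  (- d 0 1) *: delta_mx 0 0 + (d 0 0) *: delta_mx 0 1.

Lemma rot00 d : rot d 0 0 = - d 0 1.
Proof. by rewrite !mxE /= mulr1 mulr0 addr0. Qed.
Lemma rot01 d : rot d 0 1 = d 0 0.
Proof. by rewrite !mxE /= mulr1 mulr0 add0r. Qed.

Lemma d_nz (d : 'rV[R]_2) : d != 0 -> d 0 0 != 0 \/ d 0 1 != 0.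
Proof.
move=> dn; case: (eqVneq (d 0 0) 0) => h0; last by left.
case: (eqVneq (d 0 1) 0) => h1; last by right.
exfalso; move/eqP: dn; apply; apply/rowP => j; rewrite mxE.
by case: (ord2_cases j) => ->.
Qed.

Lemma rot_ok (d : 'rV[R]_2) : d != 0 ->
  rot d != 0 /\ (forall a b : R, a *: rot d + b *: d = 0 -> a = 0 /\ b = 0).
Proof.
move=> /d_nz hd.
have pos : 0 < d 0 0 ^+ 2 + d 0 1 ^+ 2.
  case: hd => h.
  - by apply: ltr_pwDl; [rewrite lt_def sqrf_eq0 h sqr_ge0|rewrite sqr_ge0].
  - by apply: ltr_pwDr; [rewrite lt_def sqrf_eq0 h sqr_ge0|rewrite sqr_ge0].
split.
  apply/eqP => hr.
  have h0 := congr1 (fun m : 'rV[R]_2 => m 0 0) hr.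
  have h1 := congr1 (fun m : 'rV[R]_2 => m 0 1) hr.
  move: h0 h1; rewrite /= rot00 rot01 !mxE => h0 h1.
  move: pos; rewrite h1 -(opprK (d 0 1)) h0; lra.
move=> a b hab.
have h0 := congr1 (fun m : 'rV[R]_2 => m 0 0) hab.
have h1 := congr1 (fun m : 'rV[R]_2 => m 0 1) hab.
move: h0 h1; rewrite /= !mxE /= !mulr1 !mulr0 addr0 add0r => h0 h1.
have ha : a * (d 0 0 ^+ 2 + d 0 1 ^+ 2) = 0.
  have -> : a * (d 0 0 ^+ 2 + d 0 1 ^+ 2) =
     d 0 0 * (a * d 0 0 + b * d 0 1) - d 0 1 * (a * - d 0 1 + b * d 0 0) by ring.
  by rewrite h0 h1; ring.
have hb : b * (d 0 0 ^+ 2 + d 0 1 ^+ 2) = 0.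
  have -> : b * (d 0 0 ^+ 2 + d 0 1 ^+ 2) =
     d 0 0 * (a * - d 0 1 + b * d 0 0) + d 0 1 * (a * d 0 0 + b * d 0 1) by ring.
  by rewrite h0 h1; ring.
have pn : (d 0 0 ^+ 2 + d 0 1 ^+ 2 == 0) = false by rewrite gt_eqF.
move/eqP: ha; rewrite mulf_eq0 pn orbF => /eqP ->.
by move/eqP: hb; rewrite mulf_eq0 pn orbF => /eqP ->.
Qed.

Lemma geo_main : exists u v : 'rV[R]_2,
    [/\ u != 0, v != 0,
        (forall a b : R, a *: u + b *: v = 0 -> a = 0 /\ b = 0) &
        forall mu lam : R, f (mu *: u + lam *: v) = f (mu *: u)].
Proof.
have [b0 [Nb0 hb00 hb01]] : exists b0 : 'rV[R]_2, [/\ N b0, b0 0 0 != 0 & b0 0 1 = 0].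
  case: (consist (delta_mx 0 0)) => H;
    [exists (delta_mx 0 0) | exists (- delta_mx 0 0)]; split => //;
    rewrite !mxE /= ?oppr_eq0 ?oner_neq0 //; by rewrite oppr0.
have [b1 [Nb1 hb10 hb11]] : exists b1 : 'rV[R]_2, [/\ N (- b1), b1 0 0 = 0 & b1 0 1 != 0].
  case: (consist (delta_mx 0 1)) => H;
    [exists (- delta_mx 0 1) | exists (delta_mx 0 1)]; split => //;
    rewrite ?opprK // !mxE /= ?oppr_eq0 ?oner_neq0 //; by rewrite oppr0.
have [s [/andP [s0 s1] Nd Nd']] := @sup_dir b0 b1 Nb0 Nb1.
set d := D b0 b1 s in Nd Nd'.
have dn : d != 0.
  apply/eqP => hd.
  have h0 := congr1 (fun m : 'rV[R]_2 => m 0 0) hd.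
  have h1 := congr1 (fun m : 'rV[R]_2 => m 0 1) hd.
  move: h0 h1; rewrite /= /d /D !mxE hb01 hb10 !mulr0 addr0 add0r => /eqP h0 /eqP h1.
  move: h0 h1; rewrite !mulf_eq0 (negbTE hb00) (negbTE hb11) !orbF subr_eq0 => /eqP h0 /eqP h1.
  by move: h0; rewrite h1 => /eqP; rewrite oner_eq0.
have [rn rind] := @rot_ok d dn.
exists (rot d), d; split => // mu lam.
exact: const.
Qed.
End Geo.

Lemma mono_of (R : realType) (f : 'rV[R]_2 -> R) : IRHS (graph f) ->
  forall w v : 'rV[R]_2,
  (forall l m : R, l <= m -> f (w + l *: v) <= f (w + m *: v)) \/
  (forall l m : R, l <= m -> f (w + m *: v) <= f (w + l *: v)).
Proof.
move=> [_ _ H3] w v.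
have [g [hm _ heq]] := H3 w v.
have gf : forall l, g (w + l *: v) = f (w + l *: v).
  move=> l.
  have : [set p | graph f p /\ line w v p.1] (w + l *: v, g (w + l *: v)).
    rewrite heq; exists (w + l *: v) => //; by exists l.
  by case => /graphE /= -> _.
case: hm => H; [left|right] => l m lm; rewrite -!gf; exact: H.
Qed.

Theorem theorem1 (R : realType) (f : 'rV[R]_2 -> R) :
  IRHS (graph f) ->
  exists u v : 'rV[R]_2,
    [/\ u != 0, v != 0,
        (forall a b : R, a *: u + b *: v = 0 -> a = 0 /\ b = 0) &
        forall mu lam : R, f (mu *: u + lam *: v) = f (mu *: u)].
Proof.
move=> H.
apply: geo_main.
- exact: mono_of.
- case: H => _ Hs _; exact: f_cont.
Qed.
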